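(* Let $C$ be a copula on $[0,1]^d$ such that $C(\mathbf{u})=1-\|\mathbf{1}-\mathbf{u}\|_D+o(\|\mathbf{1}-\mathbf{u}\|_D)$ as $\mathbf{u}\uparrow\mathbf{1}$, where $\|\cdot\|_D$ is a $D$-norm on $\mathbb{R}^d$. Let $\|\cdot\|_C$ be the $F$-norm on $\mathbb{R}^{d+1}$ corresponding to $C$. Then $$1-\|(x,1,\dots,1)\|_C=(1-x)-\frac{(1-x)^2}{2}\|\mathbf{1}\|_D+o((1-x)^2)\quad\text{as }x\uparrow1.$$
   Context: A copula on $[0,1]^d$ is a distribution function on $\mathbb{R}^d$ with standard uniform margins. If $\mathbf{U}=(U_1,\dots,U_d)$ has distribution function $C$, its $F$-norm is $\|\mathbf{x}\|_C=E(\max(|x_0|,|x_1|U_1,\dots,|x_d|U_d))$, $\mathbf{x}\in\mathbb{R}^{d+1}$. A $D$-norm on $\mathbb{R}^d$ is a norm $\|\mathbf{x}\|_D=E(\max(|x_1|Z_1,\dots,|x_d|Z_d))$ with $\mathbf{Z}$ componentwise nonnegative and $E(Z_i)=1$. $\mathbf{1}=(1,\dots,1)\in\mathbb{R}^d$; $\mathbf{u}\uparrow\mathbf{1}$ is componentwise. *)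

(* Defs.v *)
From HB Require Import structures.
From mathcomp Require Import all_boot all_order all_algebra.
From mathcomp Require Import all_classical all_reals all_analysis.
Set Implicit Arguments. Unset Strict Implicit. Unset Printing Implicit Defensive.
Import Order.TTheory GRing.Theory Num.Theory.
Local Open Scope ring_scope.
Local Open Scope classical_set_scope.

Definition is_copula_rv (R : realType) (dT : measure_display)
  (T : measurableType dT) (P : probability T R) (d : nat)
  (U : 'I_d -> T -> R) : Prop :=
  forall i, measurable_fun setT (U i) /\
    forall t : R, 0 <= t <= 1 -> P [set w | U i w <= t] = t%:E.

Definition copula_cdf (R : realType) (dT : measure_display)
  (T : measurableType dT) (P : probability T R) (d : nat)
  (U : 'I_d -> T -> R) (u : 'I_d -> R) : R :=
  fine (P [set w | forall i, U i w <= u i]).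

Definition is_Dnorm_generator (R : realType) (dT : measure_display)
  (T : measurableType dT) (Q : probability T R) (d : nat)
  (Z : 'I_d -> T -> R) : Prop :=
  forall i, measurable_fun setT (Z i) /\ (forall w, 0 <= Z i w) /\
    Q.-integrable setT (EFin \o Z i) /\
    (\int[Q]_(w in setT) (Z i w)%:E = 1)%E.

Definition Dnorm (R : realType) (dT : measure_display)
  (T : measurableType dT) (Q : probability T R) (d : nat)
  (Z : 'I_d -> T -> R) (x : 'I_d -> R) : R :=
  fine (\int[Q]_(w in setT) (\big[Num.max/0]_(i < d) (`|x i| * Z i w))%:E).

(* F-norm on R^{d+1}: ||x||_C = E(max(|x_0|, |x_1| U_1, ..., |x_d| U_d)),
   where component 0 of x : 'I_d.+1 -> R is x_0 and component lift ord0 i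
   is x_{i+1}. *)
Definition Fnorm (R : realType) (dT : measure_display)
  (T : measurableType dT) (P : probability T R) (d : nat)
  (U : 'I_d -> T -> R) (x : 'I_d.+1 -> R) : R :=
  fine (\int[P]_(w in setT)
    (Num.max `|x ord0| (\big[Num.max/0]_(i < d) (`|x (lift ord0 i)| * U i w)))%:E).

Definition x_ones (R : realType) (d : nat) (x : R) : 'I_d.+1 -> R :=
  fun i => if i == ord0 then x else 1.

(* Main.v *)
Require Import Defs.
From HB Require Import structures.
From mathcomp Require Import all_boot all_order all_algebra.
From mathcomp Require Import all_classical all_reals all_analysis.
From mathcomp Require Import measurable_realfun.
From mathcomp Require Import ring lra.
Import Order.TTheory GRing.Theory Num.Theory.
Local Open Scope ring_scope.
Local Open Scope classical_set_scope.
Lemma upper_count (R : realType) (D y : R) n : 0 < D -> forall a : R,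
  y <= a + n%:R * D ->
  Num.max a y <= a + \sum_(k < n) (if a + k%:R * D < y then D else 0).
Proof.
move=> D0; elim: n => [|n IH] a.
  by rewrite big_ord0 mul0r !addr0 => ya; rewrite ge_max lexx ya.
move=> ya; rewrite big_ord_recl /= mul0r addr0.
have -> : \sum_(i < n) (if a + (bump 0 i)%:R * D < y then D else 0)
          = \sum_(i < n) (if a + D + i%:R * D < y then D else 0).
  by apply: eq_bigr => i _; rewrite /bump /= add1n mulrSr mulrDl mul1r addrA [a + _ + D]addrAC.
have h : y <= (a + D) + n%:R * D by move: ya; rewrite mulrSr; lra.
have H := IH (a + D) h.
have H0 : forall b : R, 0 <= (if b < y then D else 0) by move=> b; case: ifP => _ //; exact: ltW.
have [ay|ya'] := ltP a y.
  by rewrite addrA; apply: le_trans H; rewrite le_max lexx orbT.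
by rewrite add0r ler_wpDr //; exact: sumr_ge0.
Qed.

Lemma lower_count (R : realType) (D y : R) n : 0 < D -> forall a : R,
  a + \sum_(k < n) (if a + k.+1%:R * D < y then D else 0) <= Num.max a y.
Proof.
move=> D0; elim: n => [|n IH] a.
  by rewrite big_ord0 addr0 le_max lexx.
rewrite big_ord_recl /= mul1r.
have -> : \sum_(i < n) (if a + (bump 0 i).+1%:R * D < y then D else 0)
          = \sum_(i < n) (if a + D + i.+1%:R * D < y then D else 0).
  by apply: eq_bigr => i _; rewrite /bump /= add1n mulrSr mulrDl mul1r addrA [a + _ + D]addrAC.
have H := IH (a + D).
have [ay|ya'] := ltP (a + D) y.
  rewrite addrA; apply: le_trans H _.
  by rewrite (max_idPr (ltW ay)) le_max lexx orbT.
move: H; rewrite (max_idPl ya') => H.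
rewrite le_max; apply/orP; left; lra.
Qed.

Lemma sum_lin (R : realType) n : (\sum_(k < n) (k%:R : R)) * 2 = n%:R * (n%:R - 1).
Proof.
elim: n => [|n IH]; first by rewrite big_ord0; ring.
by rewrite big_ord_recr /= mulrDl IH mulrSr; ring.
Qed.

Lemma mbigmax (R : realType) dT (T : measurableType dT) (I : Type) (s : seq I)
  (f : I -> T -> R) : (forall i, measurable_fun setT (f i)) ->
  measurable_fun setT (fun w => \big[Num.max/0]_(i <- s) f i w).
Proof.
move=> mf; elim: s => [|h s IH].
  by under eq_fun do rewrite big_nil; exact: measurable_cst.
by under eq_fun do rewrite big_cons; exact: measurable_maxr.
Qed.

Lemma mbigmax_ord (R : realType) dT (T : measurableType dT) d
  (f : 'I_d -> T -> R) : (forall i, measurable_fun setT (f i)) ->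
  measurable_fun setT (fun w => \big[Num.max/0]_(i < d) f i w).
Proof. exact: mbigmax. Qed.

Lemma bigmax_scale (R : realType) d (a : R) (f : 'I_d -> R) : 0 <= a ->
  \big[Num.max/0]_(i < d) (a * f i) = a * \big[Num.max/0]_(i < d) f i.
Proof.
move=> a0; elim/big_ind2 : _ => [|x1 y1 x2 y2 -> ->|]//; first by rewrite mulr0.
by rewrite maxr_pMr.
Qed.

Lemma mset_lt (R : realType) dT (T : measurableType dT) (M : T -> R) (t : R) :
  measurable_fun setT M -> measurable [set w | t < M w].
Proof.
move=> mM; have := mM measurableT _ (measurable_itv `]t, +oo[%R).
rewrite setTI; congr measurable; apply/seteqP; split => w /=; by rewrite in_itv /= andbT.
Qed.

Lemma integral_stair (R : realType) dT (T : measurableType dT) (P : probability T R)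
  (M : T -> R) (x D : R) n (a : nat -> R) :
  measurable_fun setT M -> 0 <= x -> 0 <= D ->
  (\int[P]_(w in setT) (x + \sum_(k < n) (if a k < M w then D else 0))%:E =
   (x + \sum_(k < n) D * fine (P [set w | a k < M w]))%:E)%E.
Proof.
move=> mM x0 D0.
have mA k : measurable [set w | a k < M w] by exact: mset_lt.
have E w : (x + \sum_(k < n) (if a k < M w then D else 0))%:E =
   (x%:E + \sum_(k < n) (D%:E * (\1_[set w | a k < M w] w)%:E))%E.
  rewrite EFinD sumEFin; congr (_ + _)%E; congr EFin; apply: eq_bigr => k _.
  rewrite indicE; case: ifPn => h.
    by rewrite mem_set ?mulr1.
  by rewrite memNset ?mulr0 //=; apply/negP.
under eq_integral do rewrite E.
rewrite ge0_integralD //; last 2 first.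
- move=> w _; apply: sume_ge0 => k _; rewrite -EFinM lee_fin mulr_ge0 //.
- apply: emeasurable_sum => k; apply/measurable_EFinP.
  apply: measurable_funM; first exact: measurable_cst.
  exact/measurable_indic.
have PT : (P : {measure set T -> \bar R}) setT = 1%E by exact: probability_setT.
rewrite integral_cst // PT mule1 ge0_integral_sum //; last 2 first.
- move=> k; apply/measurable_EFinP.
  apply: measurable_funM; first exact: measurable_cst.
  exact/measurable_indic.
- by move=> k w _; rewrite -EFinM lee_fin mulr_ge0.
rewrite EFinD -sumEFin; congr (_ + _)%E.
apply: eq_bigr => k _.
rewrite ge0_integralZl_EFin //.
- by rewrite integral_indic // setIT EFinM fineK // fin_num_measure.
- by apply/measurable_EFinP; apply: measurable_indic; exact: mA.
Qed.

Lemma bigmax_ge0 (R : realType) d (F : 'I_d -> R) : 0 <= \big[Num.max/0]_(i < d) F i.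
Proof. by apply/bigmax_geP; left. Qed.

Lemma fine_scale (R : realType) (a : R) (I : \bar R) : 0 <= a -> (0 <= I)%E ->
  fine (a%:E * I)%E = a * fine I.
Proof.
move=> a0; case: I => [r| |] //= _.
have [->|a0'] := eqVneq a 0; first by rewrite mul0e mul0r.
by rewrite gt0_muley ?lte_fin ?lt_def ?a0' //= mulr0.
Qed.

Lemma Dnorm_const (R : realType) dS (S : measurableType dS) (Q : probability S R) d
  (Z : 'I_d -> S -> R) (a : R) : 0 <= a ->
  (forall i, measurable_fun setT (Z i)) -> (forall i w, 0 <= Z i w) ->
  Dnorm Q Z (fun _ => a) = a * Dnorm Q Z (fun _ => 1).
Proof.
move=> a0 mZ Z0; rewrite /Dnorm.
have E w : (\big[Num.max/0]_(i < d) (`|a| * Z i w))%:E =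
   (a%:E * (\big[Num.max/0]_(i < d) (`|1| * Z i w))%:E)%E.
  rewrite -EFinM normr1 ger0_norm // -bigmax_scale //.
  by congr EFin; apply: eq_bigr => i _; rewrite mul1r.
under eq_integral do rewrite E.
rewrite ge0_integralZl_EFin //.
- by rewrite fine_scale // integral_ge0 // => w _; rewrite lee_fin bigmax_ge0.
- by move=> w _; rewrite lee_fin bigmax_ge0.
- apply/measurable_EFinP; apply: mbigmax_ord => i.
  by apply: measurable_funM => //; exact: measurable_cst.
Qed.

Lemma ccdf (R : realType) dT (T : measurableType dT) (P : probability T R) d
  (U : 'I_d -> T -> R) (t : R) : 0 <= t ->
  (forall i, measurable_fun setT (U i)) ->
  fine (P [set w | t < \big[Num.max/0]_(i < d) U i w]) =
  1 - copula_cdf P U (fun _ => t).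
Proof.
move=> t0 mU.
set A := [set w | t < _].
have mA : measurable A by apply: mset_lt; exact: mbigmax_ord.
rewrite /copula_cdf (_ : [set w | forall i, U i w <= t] = ~` A).
  rewrite probability_setC // -[P A]fineK ?fin_num_measure //=.
  ring.
apply/seteqP; split => w /=.
- move=> H; rewrite /A /=; apply/negP; rewrite -leNgt; apply/bigmax_leP; split => // i _; exact: H.
- rewrite /A /= => /negP; rewrite -leNgt => /bigmax_leP [_ H] i; exact: H.
Qed.


Lemma stairE (R : realType) dT (T : measurableType dT) (M : T -> R) (x D : R) n
  (a : nat -> R) (w : T) :
  (x + \sum_(k < n) (if a k < M w then D else 0))%:E =
   (x%:E + \sum_(k < n) (D%:E * (\1_[set w | a k < M w] w)%:E))%E.
Proof.
rewrite EFinD sumEFin; congr (_ + _)%E; congr EFin; apply: eq_bigr => k _.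
rewrite indicE; case: ifPn => h.
  by rewrite mem_set ?mulr1.
by rewrite memNset ?mulr0 //=; apply/negP.
Qed.

Lemma mstair (R : realType) dT (T : measurableType dT) (M : T -> R) (x D : R) n
  (a : nat -> R) : measurable_fun setT M ->
  measurable_fun setT (fun w => (x + \sum_(k < n) (if a k < M w then D else 0))%:E).
Proof.
move=> mM.
under eq_fun do rewrite stairE.
apply: emeasurable_funD; first exact: measurable_cst.
apply: emeasurable_sum => k; apply/measurable_EFinP.
apply: measurable_funM; first exact: measurable_cst.
by apply: measurable_indic; exact: mset_lt.
Qed.

Lemma sum_affine (R : realType) n (al be : R) :
  \sum_(k < n) (al + be * k%:R) = n%:R * al + be * \sum_(k < n) (k%:R : R).
Proof.
elim: n => [|n IH]; first by rewrite !big_ord0 mul0r mulr0 addr0.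
by rewrite !big_ord_recr /= IH mulrSr; ring.
Qed.

Lemma final_arith (R : realType) (c e N h F S0 : R) :
  0 <= c -> 0 < e -> 1 <= N -> c + 1 < e * N -> 0 < h -> S0 * 2 = N * (N - 1) ->
  F <= (1 - h) + N * (h / N * (1 + e / (2 * (c + 1))) * c * h)
        - h / N * (h / N) * (1 + e / (2 * (c + 1))) * c * S0 ->
  (1 - h) + N * (h / N * (1 - e / (2 * (c + 1))) * c * (h - h / N))
        - h / N * (h / N) * (1 - e / (2 * (c + 1))) * c * S0 <= F ->
  `|(1 - F) - (h - h ^+ 2 / 2 * c)| <= e * h ^+ 2.
Proof.
move=> c0 e0 N1 ceN h0 S0E.
set e' := e / (2 * (c + 1)).
have N0 : 0 < N by lra.
have NN : N != 0 by rewrite gt_eqF.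
have c1 : 0 < c + 1 by lra.
have c1N : c + 1 != 0 by rewrite gt_eqF.
have S0E' : S0 = N * (N - 1) / 2 by rewrite -S0E; field.
set q := h ^+ 2.
have q0 : 0 < q by rewrite /q exprn_gt0.
set K := c * q.
have K0 : 0 <= K by rewrite /K mulr_ge0 // ltW.
have e'0 : 0 <= e' by rewrite /e' divr_ge0 ?mulr_ge0 //; lra.
have EU : N * (h / N * (1 + e') * c * h) - h / N * (h / N) * (1 + e') * c * S0
        - K / 2 = K / (2 * N) + e' * K * ((N + 1) / (2 * N)).
  by rewrite S0E' /K /q; field.
have EL : K / 2 - (N * (h / N * (1 - e') * c * (h - h / N))
        - h / N * (h / N) * (1 - e') * c * S0)
        = K / (2 * N) + e' * K * ((N - 1) / (2 * N)).
  by rewrite S0E' /K /q; field.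
have A1 : K / (2 * N) <= e * q / 2.
  rewrite ler_pdivrMr ?mulr_gt0 //.
  have : c * q <= (e * N) * q by rewrite ler_wpM2r // ?ltW //; lra.
  rewrite /K; lra.
have r1 : (N + 1) / (2 * N) <= 1 by rewrite ler_pdivrMr ?mulr_gt0 //; lra.
have r2 : 0 <= (N - 1) / (2 * N) by rewrite divr_ge0 ?mulr_ge0; lra.
have A2 : e' * K * ((N + 1) / (2 * N)) <= e' * K by rewrite ler_piMr // mulr_ge0.
have A2' : e' * K * ((N - 1) / (2 * N)) <= e' * K * ((N + 1) / (2 * N)).
  apply: ler_wpM2l; first by rewrite mulr_ge0.
  apply: ler_wpM2r; last by lra.
  by rewrite invr_ge0 mulr_ge0 //; lra.
have A3 : e' * K <= e * q / 2.
  have -> : e' * K = e * q / 2 * (c / (c + 1)) by rewrite /e' /K; field.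
  apply: ler_piMr; first by rewrite !mulr_ge0 ?invr_ge0 // ?ltW //; lra.
  by rewrite ler_pdivrMr //; lra.
have hK : h ^+ 2 / 2 * c = K / 2 by rewrite /K /q; field.
rewrite hK ler_norml => FU FL; apply/andP; split; lra.
Qed.

Theorem proposition2p21 (R : realType) (d : nat)
  (dT : measure_display) (T : measurableType dT) (P : probability T R)
  (U : 'I_d -> T -> R)
  (dS : measure_display) (S : measurableType dS) (Q : probability S R)
  (Z : 'I_d -> S -> R) :
  is_copula_rv P U ->
  is_Dnorm_generator Q Z ->
  (* C(u) = 1 - ||1-u||_D + o(||1-u||_D) as u increases to 1 componentwise *)
  (forall eps : R, 0 < eps -> exists delta : R, 0 < delta /\
     forall u : 'I_d -> R, (forall i, 1 - delta < u i <= 1) ->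
       `|copula_cdf P U u - (1 - Dnorm Q Z (fun i => 1 - u i))|
         <= eps * Dnorm Q Z (fun i => 1 - u i)) ->
  (* 1 - ||(x,1,..,1)||_C = (1-x) - (1-x)^2/2 ||1||_D + o((1-x)^2) as x ↑ 1 *)
  forall eps : R, 0 < eps -> exists delta : R, 0 < delta /\
    forall x : R, 1 - delta < x < 1 ->
      `|(1 - Fnorm P U (@x_ones R d x))
          - ((1 - x) - (1 - x) ^+ 2 / 2 * Dnorm Q Z (fun _ => 1))|
        <= eps * (1 - x) ^+ 2.
Proof.
move=> hU hZ hC eps eps0.
have mU i : measurable_fun setT (U i) := (hU i).1.
have mZ i : measurable_fun setT (Z i) := (hZ i).1.
have Z0 i w : 0 <= Z i w := (hZ i).2.1 w.
set c := Dnorm Q Z (fun _ => 1).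
have c0 : 0 <= c.
  by rewrite /c /Dnorm fine_ge0 // integral_ge0 // => w _; rewrite lee_fin bigmax_ge0.
have e'0 : 0 < eps / (2 * (c + 1)) by rewrite divr_gt0 // mulr_gt0 //; lra.
have [d0 [d00 hd]] := hC _ e'0.
pose M w := \big[Num.max/0]_(i < d) U i w.
have mM : measurable_fun setT M by exact: mbigmax_ord.
pose g t := fine (P [set w | t < M w]).
have key t : 0 <= t -> 1 - d0 < t <= 1 ->
    `|g t - (1 - t) * c| <= eps / (2 * (c + 1)) * ((1 - t) * c).
  move=> t0 /andP[t1 t2].
  have H : forall i : 'I_d, 1 - d0 < (fun _ => t) i <= 1 by move=> _; rewrite t1 t2.
  have := hd _ H.
  rewrite /= Dnorm_const //; last by rewrite subr_ge0.
  have -> : g t - (1 - t) * c =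
      - (copula_cdf P U (fun _ => t) - (1 - (1 - t) * c)).
    by rewrite /g /M ccdf //; ring.
  by rewrite normrN.
have g1 : g 1 = 0.
  have := key 1 ler01; rewrite lexx andbT subrr mul0r mulr0 subr0 normr_le0.
  by move=> /(_ ltac:(lra)) /eqP.
have PN : P [set w | 1 < M w] = 0%E.
  rewrite -[P _]fineK; first by rewrite -/(g 1) g1.
  by rewrite fin_num_measure //; exact: mset_lt.
exists (Num.min d0 1); split; first by rewrite lt_min d00 ltr01.
move=> x /andP[x1 x2].
have m1 : Num.min d0 1 <= d0 by rewrite ge_min lexx.
have m2 : Num.min d0 1 <= 1 by rewrite ge_min lexx orbT.
have xd0 : 1 - d0 < x by lra.
have x0 : 0 < x by lra.
have h0 : 0 < 1 - x by lra.
pose n := (Num.bound ((c + 1) / eps)).+1.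
have N1 : 1 <= (n%:R : R) by rewrite ler1n.
have N0 : 0 < (n%:R : R) by lra.
have ceN : c + 1 < eps * n%:R.
  have := archi_boundP (ltW (divr_gt0 (ltr_pwDr ltr01 c0) eps0)).
  rewrite ltr_pdivrMr // mulrC => H; apply: lt_le_trans H _.
  by rewrite ler_pM2l // ler_nat /n.
have D0 : 0 < (1 - x) / n%:R by rewrite divr_gt0.
have xnD : x + n%:R * ((1 - x) / n%:R) = 1 by field; rewrite gt_eqF.
set I := (\int[P]_(w in setT) (Num.max x (M w))%:E)%E.
have FE : Fnorm P U (@x_ones R d x) = fine I.
  rewrite /Fnorm /I /x_ones eqxx ger0_norm ?ltW //; congr fine.
  apply: eq_integral => w _; congr (EFin (Num.max _ _)).
  apply: eq_bigr => i _.
  have -> : (lift ord0 i == ord0) = false by apply/negbTE; rewrite eq_sym neq_lift.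
  by rewrite normr1 mul1r.
have mf : measurable_fun setT (fun w => (Num.max x (M w))%:E).
  by apply/measurable_EFinP; apply: measurable_maxr => //; exact: measurable_cst.
have UB := @integral_stair _ _ _ P M x ((1 - x) / n%:R) n
   (fun k : nat => x + k%:R * ((1 - x) / n%:R)) mM (ltW x0) (ltW D0).
cbv beta in UB.
have Iup : (I <= (x + \sum_(k < n) (1 - x) / n%:R * g (x + k%:R * ((1 - x) / n%:R)))%:E)%E.
  rewrite -UB; apply: ae_ge0_le_integral => //.
  - by move=> w _; rewrite lee_fin le_max (ltW x0).
  - move=> w _; rewrite lee_fin; apply: addr_ge0; first exact: ltW.
    apply: sumr_ge0 => k _.
    by case: ifP => _ //; exact: ltW.
  - exact: (@mstair _ _ _ M x _ n (fun k : nat => x + k%:R * ((1 - x) / n%:R)) mM).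
  exists [set w | 1 < M w]; split; first exact: mset_lt.
    exact: PN.
  move=> w /=; apply: contra_notP => /negP; rewrite -leNgt => Mw1 _.
  rewrite lee_fin; apply: upper_count => //.
  by rewrite xnD.
have LB0 := @integral_stair _ _ _ P M x ((1 - x) / n%:R) n
   (fun k : nat => x + k.+1%:R * ((1 - x) / n%:R)) mM (ltW x0) (ltW D0).
cbv beta in LB0.
have Ilo : ((x + \sum_(k < n) (1 - x) / n%:R * g (x + k.+1%:R * ((1 - x) / n%:R)))%:E <= I)%E.
  rewrite -LB0; apply: ge0_le_integral => //.
  - move=> w _; rewrite lee_fin; apply: addr_ge0; first exact: ltW.
    apply: sumr_ge0 => k _.
    by case: ifP => _ //; exact: ltW.
  - exact: (@mstair _ _ _ M x _ n (fun k : nat => x + k.+1%:R * ((1 - x) / n%:R)) mM).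
  - by move=> w _; rewrite lee_fin; apply: lower_count.
have I0 : (0 <= I)%E by apply: integral_ge0 => w _; rewrite lee_fin le_max (ltW x0).
have Ifin : I \is a fin_num by rewrite ge0_fin_numE // (le_lt_trans Iup) // ltry.
rewrite FE; set F := fine I.
have IF : I = F%:E by rewrite fineK.
move: Iup Ilo; rewrite IF !lee_fin => Iup Ilo.
have SU : \sum_(k < n) (1 - x) / n%:R * g (x + k%:R * ((1 - x) / n%:R)) <=
    n%:R * ((1 - x) / n%:R * (1 + eps / (2 * (c + 1))) * c * (1 - x))
    - (1 - x) / n%:R * ((1 - x) / n%:R) * (1 + eps / (2 * (c + 1))) * c
      * \sum_(k < n) (k%:R : R).
  apply: (@le_trans _ _ (\sum_(k < n) ((1 - x) / n%:R * (1 + eps / (2 * (c + 1))) * c * (1 - x)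
      + (- ((1 - x) / n%:R * ((1 - x) / n%:R) * (1 + eps / (2 * (c + 1))) * c)) * k%:R))).
    apply: ler_sum => k _.
    have kn : (k%:R : R) <= n%:R by rewrite ler_nat ltnW.
    have kD : k%:R * ((1 - x) / n%:R) <= 1 - x.
      by apply: (le_trans (ler_wpM2r (ltW D0) kn)); lra.
    have k0 : 0 <= k%:R * ((1 - x) / n%:R) by rewrite mulr_ge0 // ltW.
    have := key (x + k%:R * ((1 - x) / n%:R)) ltac:(lra).
    rewrite ler_norml => /(_ ltac:(apply/andP; split; lra)) /andP[_ H].
    set t := x + _ in H *.
    have -> : (1 - x) / n%:R * (1 + eps / (2 * (c + 1))) * c * (1 - x) +
        - ((1 - x) / n%:R * ((1 - x) / n%:R) * (1 + eps / (2 * (c + 1))) * c) * k%:R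
        = (1 - x) / n%:R * ((1 - t) * c + eps / (2 * (c + 1)) * ((1 - t) * c)).
      by rewrite /t; ring.
    by apply: ler_wpM2l; [exact: ltW | lra].
  by rewrite sum_affine le_eqVlt; apply/orP; left; apply/eqP; ring.
have SL : n%:R * ((1 - x) / n%:R * (1 - eps / (2 * (c + 1))) * c * ((1 - x) - (1 - x) / n%:R))
    - (1 - x) / n%:R * ((1 - x) / n%:R) * (1 - eps / (2 * (c + 1))) * c
      * \sum_(k < n) (k%:R : R)
    <= \sum_(k < n) (1 - x) / n%:R * g (x + k.+1%:R * ((1 - x) / n%:R)).
  apply: (@le_trans _ _ (\sum_(k < n) ((1 - x) / n%:R * (1 - eps / (2 * (c + 1))) * c
      * ((1 - x) - (1 - x) / n%:R)
      + (- ((1 - x) / n%:R * ((1 - x) / n%:R) * (1 - eps / (2 * (c + 1))) * c)) * k%:R))).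
    by rewrite sum_affine le_eqVlt; apply/orP; left; apply/eqP; ring.
  apply: ler_sum => k _.
  have kn : (k.+1%:R : R) <= n%:R by rewrite ler_nat.
  have kD : k.+1%:R * ((1 - x) / n%:R) <= 1 - x.
    by apply: (le_trans (ler_wpM2r (ltW D0) kn)); lra.
  have k0 : 0 <= k.+1%:R * ((1 - x) / n%:R) by rewrite mulr_ge0 // ltW.
  have := key (x + k.+1%:R * ((1 - x) / n%:R)) ltac:(lra).
  rewrite ler_norml => /(_ ltac:(apply/andP; split; lra)) /andP[H _].
  set t := x + _ in H *.
  have -> : (1 - x) / n%:R * (1 - eps / (2 * (c + 1))) * c * ((1 - x) - (1 - x) / n%:R) +
      - ((1 - x) / n%:R * ((1 - x) / n%:R) * (1 - eps / (2 * (c + 1))) * c) * k%:R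
      = (1 - x) / n%:R * ((1 - t) * c - eps / (2 * (c + 1)) * ((1 - t) * c)).
    by rewrite /t mulrSr; ring.
  by apply: ler_wpM2l; [exact: ltW | lra].
have := @final_arith R c eps n%:R (1 - x) F (\sum_(k < n) (k%:R : R)) c0 eps0 N1 ceN h0 (sum_lin R n).
move=> H; apply: H; lra.
Qed.
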